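(* Let $K$ be a non-Archimedean locally compact field of characteristic $p>0$ with group of 1-units $U=1+M_K$. Let $f:U\to U$ be a locally analytic group endomorphism with $f(1+x)=\sum_{n=0}^{\infty}a_nx^n$ for all $x\in M_K$, where $\sum a_nx^n\in 1+x\mathbb{F}_p[[x]]$. If $a_n=0$ for all but finitely many $n$, then $f(1+x)=(1+x)^N$ for some integer $N\ge0$.
   Context: $M_K$ is the maximal ideal of the ring of integers $R_K$ of $K$; with constant field $\mathbb{F}$ of order $q$ and uniformizer $\pi$, $K=\mathbb{F}((\pi))$, $U=1+\pi\mathbb{F}[[\pi]]$, and $|x|=q^{-v(x)}$. A continuous function $f$ on a ball $B_{\alpha,t}=\{u\in R_K:|u-\alpha|\le t\}$, $t=|\rho|$, is analytic there if $f(u)=\sum_{n\ge0}c_n\left(\frac{u-\alpha}{\rho}\right)^n$ with $c_n\in K$, $c_n\to0$; $f:U\to K$ is locally analytic if each $\alpha\in U$ has a ball $B_{\alpha,t_\alpha}\subset U$, $t_\alpha>0$, on which $f$ is analytic. *)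

(* Defs.v *)
From HB Require Import structures.
From mathcomp Require Import all_boot all_order all_algebra.
Set Implicit Arguments. Unset Strict Implicit. Unset Printing Implicit Defensive.
Import Order.TTheory GRing.Theory Num.Theory.
Local Open Scope ring_scope.

Section LocalField.
Variables (K : fieldType) (v : K -> int).

(* "v(x) >= m", with the convention v(0) = +oo *)
Definition vge (x : K) (m : int) : bool := (x == 0) || (m <= v x).

Definition RK (x : K) : bool := vge x 0.
Definition MK (x : K) : bool := vge x 1.
Definition UK (u : K) : bool := MK (u - 1).

Definition cvgK (s : nat -> K) (l : K) : Prop :=
  forall m : int, exists N : nat, forall n, (N <= n)%N -> vge (s n - l) m.
Definition cauchyK (s : nat -> K) : Prop :=
  forall m : int, exists N : nat, forall n k, (N <= n)%N -> (N <= k)%N ->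
    vge (s n - s k) m.

Definition seriesK (c : nat -> K) (l : K) : Prop :=
  cvgK (fun N => \sum_(n < N) c n) l.

(* K is a non-Archimedean locally compact field of characteristic p, i.e. a
   field complete for the discrete valuation v (normalized, with uniformizer
   pi) whose residue field R_K / M_K is finite, and of characteristic p. *)
Record is_local_field (p : nat) (pi : K) : Prop := {
  lf_vM : forall x y, x != 0 -> y != 0 -> v (x * y) = v x + v y;
  lf_vD : forall x y, x != 0 -> y != 0 -> x + y != 0 ->
            Num.min (v x) (v y) <= v (x + y);
  lf_pi0 : pi != 0;
  lf_vpi : v pi = 1;
  lf_char : p \in [pchar K];
  lf_residue_finite : exists s : seq K, all RK s /\
      forall x, RK x -> exists2 r, r \in s & MK (x - r);
  lf_complete : forall s, cauchyK s -> exists l, cvgK s l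
}.

Definition ballK (alpha rho u : K) : bool := RK u && vge (u - alpha) (v rho).

Definition locally_analytic (f : K -> K) : Prop :=
  forall alpha, UK alpha ->
    exists rho : K, rho != 0 /\
      (forall u, ballK alpha rho u -> UK u) /\
      exists c : nat -> K, cvgK c 0 /\
        forall u, ballK alpha rho u ->
          seriesK (fun n => c n * ((u - alpha) / rho) ^+ n) (f u).

Definition U_endo (f : K -> K) : Prop :=
  (forall u, UK u -> UK (f u)) /\
  (forall u w, UK u -> UK w -> f (u * w) = f u * f w).

End LocalField.

(* Main.v *)
Require Import Defs.
From mathcomp Require Import all_boot all_order all_algebra.
From mathcomp Require Import ring zify.
Import Order.TTheory GRing.Theory Num.Theory.
Local Open Scope ring_scope.

Set Implicit Arguments.
Section Aux.
Variables (p : nat) (K : fieldType) (v : K -> int) (pi : K).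
Hypothesis HK : is_local_field v p pi.

Lemma v1 : v 1 = 0.
Proof.
have := lf_vM HK (oner_neq0 K) (oner_neq0 K); rewrite mulr1 => h.
have : v 1 + v 1 - v 1 = v 1 - v 1 by rewrite -h.
by rewrite addrK subrr.
Qed.

Lemma vN1 : v (-1) = 0.
Proof.
have n1 : (-1 : K) != 0 by rewrite oppr_eq0 oner_neq0.
have := lf_vM HK n1 n1; rewrite mulrNN mulr1 v1 => h.
have : (v (-1)) * 2 = 0 by rewrite mulr2n mulrDr mulr1 h.
by move/eqP; rewrite mulf_eq0 => /orP[/eqP //|]; rewrite pnatr_eq0.
Qed.

Lemma vpiX n : v (pi ^+ n) = n%:Z.
Proof.
elim: n => [|n IH]; first by rewrite expr0 v1.
rewrite exprS (lf_vM HK) ?expf_neq0 ?(lf_pi0 HK) // IH (lf_vpi HK).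
by rewrite -addn1 PoszD addrC.
Qed.

Lemma vge_add x y m : vge v x m -> vge v y m -> vge v (x + y) m.
Proof.
rewrite /vge; have [->|x0] := eqVneq x 0; first by rewrite add0r => _.
have [->|y0] := eqVneq y 0; first by rewrite addr0 (negbTE x0).
rewrite /= => hx hy.
have [->|s0] := eqVneq (x + y) 0; first by [].
apply/orP; right; apply: le_trans (lf_vD HK x0 y0 s0).
by rewrite le_min hx hy.
Qed.

Lemma vge_mul x y : vge v x 1 -> vge v y 1 -> vge v (x * y) 1.
Proof.
rewrite /vge; have [->|x0] := eqVneq x 0; first by rewrite mul0r eqxx.
have [->|y0] := eqVneq y 0; first by rewrite mulr0 eqxx.
rewrite /= => hx hy; rewrite mulf_eq0 (negbTE x0) (negbTE y0) /=.
rewrite (lf_vM HK) //; apply: le_trans hx _; rewrite lerDl.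
by apply: le_trans hy.
Qed.

Lemma UK_mul u w : UK v u -> UK v w -> UK v (u * w).
Proof.
rewrite /UK /MK => hu hw.
have -> : u * w - 1 = (u - 1) * (w - 1) + ((u - 1) + (w - 1)).
  by ring.
by apply: vge_add; [apply: vge_mul | apply: vge_add].
Qed.

Lemma UK_pi k : UK v (1 + pi ^+ k.+1).
Proof.
rewrite /UK /MK /vge addrAC subrr add0r vpiX; apply/orP; right.
by rewrite lez_nat.
Qed.

Lemma poly_U0 (q : {poly K}) : (forall u, UK v u -> q.[u] = 0) -> q = 0.
Proof.
move=> hq; apply/eqP; apply/negPn/negP => q0.
set rs := mkseq (fun k => 1 + pi ^+ k.+1) (size q).
have H1 : all (root q) rs.
  by apply/allP => x /mapP[k _ ->]; apply/rootP/hq/UK_pi.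
have H2 : uniq rs.
  rewrite map_inj_uniq ?iota_uniq // => i j /addrI h.
  by have := congr1 v h; rewrite !vpiX => /eqP; rewrite eqz_nat eqSS => /eqP.
by have := max_poly_roots q0 H1 H2; rewrite size_mkseq ltnn.
Qed.

End Aux.
Unset Implicit Arguments.

Theorem lemma2p3 (p : nat) (K : fieldType) (v : K -> int) (pi : K)
  (HK : is_local_field v p pi)
  (f : K -> K) (Hend : U_endo v f) (Han : locally_analytic v f)
  (a : nat -> 'F_p) (Ha0 : a 0%N = 1%R)
  (Hser : forall x, MK v x ->
     seriesK v (fun n => ((a n : nat)%:R : K) * x ^+ n) (f (1 + x)))
  (Hfin : exists M : nat, forall n, (M <= n)%N -> a n = 0%R) :
  exists N : nat, forall x, MK v x -> f (1 + x) = (1 + x) ^+ N.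
Proof.
case: Hfin => M HM.
have Heval : forall x, MK v x ->
    f (1 + x) = \sum_(n < M) ((a n : nat)%:R : K) * x ^+ n.
  move=> x hx; have := Hser x hx.
  set S := \sum_(n < M) _ => hs.
  apply/eqP; rewrite eq_sym -subr_eq0; apply/eqP.
  apply/eqP/negPn/negP => d0.
  have [N hN] := hs (v (S - f (1 + x)) + 1).
  have := hN (N + M)%N (leq_addr _ _).
  have -> : \sum_(n < N + M) ((a n : nat)%:R : K) * x ^+ n = S.
    rewrite addnC big_split_ord /= [X in _ + X]big1 ?addr0 //.
    move=> i _; rewrite HM ?leq_addr //= mul0r //.
  rewrite /vge (negbTE d0) /= => h.
  by move: h; rewrite -{2}[v _]addr0 lerD2l.
set gp : {poly K} := \sum_(n < M) ((a n : nat)%:R : K) *: ('X - 1) ^+ n.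
have Hg : forall u, UK v u -> f u = gp.[u].
  move=> u hu; have := Heval (u - 1) hu; rewrite addrC subrK => ->.
  rewrite /gp horner_sum; apply: eq_bigr => i _.
  by rewrite hornerZ horner_exp hornerD hornerN hornerX hornerC.
have Hmul : forall u w, UK v u -> UK v w -> gp.[u * w] = gp.[u] * gp.[w].
  move=> u w hu hw; have [_ Hm] := Hend; have huw := UK_mul HK u w hu hw.
  by rewrite -!Hg //; apply: Hm.
have gp0 : gp != 0.
  apply/negP => /eqP g0.
  have h1 : UK v 1 by rewrite /UK /MK subrr /vge eqxx.
  have [Hu _] := Hend; have := Hu 1 h1; rewrite Hg // g0 horner0 /UK /MK sub0r /vge.
  by rewrite oppr_eq0 oner_eq0 /= (vN1 HK).
set N := (size gp).-1.
have lc0 : gp`_N != 0 by rewrite -lead_coefE lead_coef_eq0.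
have HN : (N < size gp)%N by rewrite /N prednK // lt0n size_poly_eq0.
have Hw : forall w, UK v w -> gp.[w] = w ^+ N.
  move=> w hw.
  set q := \poly_(i < size gp) (gp`_i * w ^+ i) - gp.[w] *: gp.
  have q0 : q = 0.
    apply: (poly_U0 HK) => u hu.
    rewrite /q hornerD hornerN hornerZ (horner_coef_wide _ (size_poly _ _)).
    have -> : \sum_(i < size gp) (\poly_(i0 < size gp) (gp`_i0 * w ^+ i0))`_i * u ^+ i
        = gp.[w * u].
      rewrite horner_coef; apply: eq_bigr => i _.
      by rewrite coef_poly ltn_ord exprMn mulrA.
    by rewrite Hmul // subrr.
  have := congr1 (fun r : {poly K} => r`_N) q0.
  rewrite /q coefB coefZ coef_poly HN coef0 => /eqP; rewrite subr_eq0 => /eqP.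
  by rewrite mulrC => /(mulIf lc0) ->.
exists N => x hx.
have hu : UK v (1 + x) by rewrite /UK addrAC subrr add0r.
by rewrite Hg // Hw.
Qed.
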